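(* Let $\mathcal A=\mathcal A_0\oplus\mathcal A_1$ be a GDN superalgebra generated by $X=X_0\cup X_1$ with $X_0\subseteq\mathcal A_0$, $X_1\subseteq\mathcal A_1$. Then for every integer $q\ge1$, $$[\mathcal A_0,\underbrace{\mathcal A_1,\dots,\mathcal A_1}_{q}]_L\subseteq\sum_{\substack{2t+m+p=q\\ t,m\ge0,\ p\in\{1,2\}}}[\mathcal A_0,\underbrace{\mathcal A_0,\dots,\mathcal A_0}_{t},\underbrace{kX_1,\dots,kX_1}_{m},\underbrace{\mathcal A_1,\dots,\mathcal A_1}_{p}]_L,$$ where $kX_1$ is the linear span of $X_1$.
   Context: A GDN superalgebra is a superalgebra $\mathcal A=\mathcal A_0\oplus\mathcal A_1$ over a field $k$ (product $\circ$, $\mathcal A_i\circ\mathcal A_j\subseteq\mathcal A_{i+j}$ mod 2, $|x|=i$ for nonzero $x\in\mathcal A_i$) satisfying for homogeneous $x,y,z$: $x\circ(y\circ z)-(x\circ y)\circ z=(-1)^{|x||y|}(y\circ(x\circ z)-(y\circ x)\circ z)$ and $(x\circ y)\circ z=(-1)^{|y||z|}(x\circ z)\circ y$. For subspaces $\mathcal V_i$, $[\mathcal V_1,\dots,\mathcal V_n]_L$ denotes the span of all $((\cdots((x_1\circ x_2)\circ x_3)\cdots)\circ x_n)$ with $x_i\in\mathcal V_i$. *)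

(* Defs.v *)
From HB Require Import structures.
From mathcomp Require Import all_boot all_order all_algebra.
Set Implicit Arguments. Unset Strict Implicit. Unset Printing Implicit Defensive.
Import GRing.Theory.
Local Open Scope ring_scope.

Section GDN.
Variables (k : fieldType) (V : lmodType k).

Definition is_subspace (S : V -> Prop) : Prop :=
  S 0 /\ forall (a : k) x y, S x -> S y -> S (a *: x + y).

Definition lin_span (S : V -> Prop) (v : V) : Prop :=
  exists (n : nat) (c : 'I_n -> k) (w : 'I_n -> V),
    (forall i, S (w i)) /\ v = \sum_(i < n) c i *: w i.

Variable mul : V -> V -> V.

Fixpoint lnorm (x : V) (ys : seq V) : V :=
  if ys is y :: ys' then lnorm (mul x y) ys' else x.

Definition Lprods (V1 : V -> Prop) (Vs : seq (V -> Prop)) (v : V) : Prop :=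
  exists x ys, V1 x /\ size ys = size Vs /\
    (forall i, (i < size Vs)%N -> nth (fun _ => True) Vs i (nth 0 ys i)) /\
    v = lnorm x ys.

Definition Lspan (V1 : V -> Prop) (Vs : seq (V -> Prop)) : V -> Prop :=
  lin_span (Lprods V1 Vs).

(* sign (-1)^(|x||y|) for degrees i j : bool (false = even, true = odd) *)
Definition ssign (i j : bool) : k := if i && j then -1 else 1.

Definition GDN_superalgebra (A : bool -> V -> Prop) : Prop :=
      (forall (a : k) x y z, mul (a *: x + y) z = a *: mul x z + mul y z) /\
      (forall (a : k) x y z, mul z (a *: x + y) = a *: mul z x + mul z y) /\
      (forall i, is_subspace (A i)) /\
      (forall v, exists v0 v1, A false v0 /\ A true v1 /\ v = v0 + v1) /\
      (forall v, A false v -> A true v -> v = 0) /\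
      (forall i j x y, A i x -> A j y -> A (i (+) j) (mul x y)) /\
      (forall i j l x y z, A i x -> A j y -> A l z ->
         mul x (mul y z) - mul (mul x y) z =
         ssign i j *: (mul y (mul x z) - mul (mul y x) z)
         /\ mul (mul x y) z = ssign j l *: mul (mul x z) y).

Definition gen_subalg (X : V -> Prop) (v : V) : Prop :=
  forall S : V -> Prop, is_subspace S -> (forall x y, S x -> S y -> S (mul x y)) ->
    (forall x, X x -> S x) -> S v.

Definition generates (X : V -> Prop) : Prop := forall v, gen_subalg X v.

End GDN.

(* Main.v *)
Require Import Defs.
From HB Require Import structures.
From mathcomp Require Import all_boot all_order all_algebra.
From mathcomp Require Import zify.
Import GRing.Theory.
Local Open Scope ring_scope.
Set Implicit Arguments. Unset Strict Implicit. Unset Printing Implicit Defensive.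

Section Span.
Variables (k : fieldType) (V : lmodType k).

Lemma sub0 (W : V -> Prop) : is_subspace W -> W 0.
Proof. by case. Qed.
Lemma subZD (W : V -> Prop) a x y : is_subspace W -> W x -> W y -> W (a *: x + y).
Proof. by case=> _ H; apply: H. Qed.
Lemma subD (W : V -> Prop) x y : is_subspace W -> W x -> W y -> W (x + y).
Proof. by move=> HW Hx Hy; rewrite -[x]scale1r; apply: subZD. Qed.
Lemma subZ (W : V -> Prop) a x : is_subspace W -> W x -> W (a *: x).
Proof. by move=> HW Hx; rewrite -[a *: x]addr0; apply: subZD => //; apply: sub0. Qed.
Lemma subN (W : V -> Prop) x : is_subspace W -> W x -> W (- x).
Proof. by move=> HW Hx; rewrite -scaleN1r; apply: subZ. Qed.
Lemma subB (W : V -> Prop) x y : is_subspace W -> W x -> W y -> W (x - y).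
Proof. by move=> HW Hx Hy; apply: subD => //; apply: subN. Qed.

Lemma lin_span_min (S W : V -> Prop) v :
  lin_span S v -> is_subspace W -> (forall x, S x -> W x) -> W v.
Proof.
case=> n [c [w [Hw ->]]] HW HS.
elim: n c w Hw => [|n IH] c w Hw; first by rewrite big_ord0; apply: sub0.
rewrite big_ord_recr /= addrC; apply: subZD => //; first exact: HS.
exact: IH.
Qed.

Lemma lin_span_cons (S : V -> Prop) a s y :
  S s -> lin_span S y -> lin_span S (a *: s + y).
Proof.
move=> Hs [n [c [w [Hw ->]]]].
exists n.+1, (fun i => if unlift ord0 i is Some j then c j else a),
  (fun i => if unlift ord0 i is Some j then w j else s); split.
  by move=> i; case: (unlift ord0 i).
by rewrite big_ord_recl unlift_none; congr (_ + _); apply: eq_bigr => i _; rewrite liftK.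
Qed.

Lemma lin_span0 (S : V -> Prop) : lin_span S 0.
Proof. by exists 0%N, (fun _ => 0), (fun _ => 0); split; [by case | by rewrite big_ord0]. Qed.

Lemma lin_span_sub (S : V -> Prop) : is_subspace (lin_span S).
Proof.
split; first exact: lin_span0.
move=> a x y [n [c [w [Hw ->]]]] Hy.
elim: n c w Hw => [|n IH] c w Hw; first by rewrite big_ord0 scaler0 add0r.
rewrite big_ord_recl scalerDr scalerA -addrA; apply: lin_span_cons; first exact: Hw.
exact: IH.
Qed.

Lemma lin_span_in (S : V -> Prop) x : S x -> lin_span S x.
Proof. by move=> Hx; rewrite -[x]addr0 -[x]scale1r; apply: lin_span_cons => //; apply: lin_span0. Qed.

Definition pm (u w : V) := u = w \/ u = - w.
Lemma pm_refl u : pm u u. Proof. by left. Qed.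
Lemma pm_sym u w : pm u w -> pm w u.
Proof. by case=> ->; [left|right; rewrite opprK]. Qed.
Lemma pm_trans u w z : pm u w -> pm w z -> pm u z.
Proof. by case=> ->; case=> ->; rewrite ?opprK; [left|right|right|left]. Qed.
Lemma pm_sub (W : V -> Prop) u w : is_subspace W -> pm u w -> W w -> W u.
Proof. by move=> HW [->|->] // Hw; apply: subN. Qed.

End Span.

Section Alg.
Variables (k : fieldType) (V : lmodType k) (mul : V -> V -> V) (A : bool -> V -> Prop)
  (X0 X1 : V -> Prop).
Hypothesis HA : GDN_superalgebra mul A.
Hypothesis HX0 : forall x, X0 x -> A false x.
Hypothesis HX1 : forall x, X1 x -> A true x.
Hypothesis Hgen : generates mul (fun x => X0 x \/ X1 x).

Local Notation ln := (lnorm mul).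

Lemma mulZDl a x y z : mul (a *: x + y) z = a *: mul x z + mul y z.
Proof. by case: HA. Qed.
Lemma mulZDr a x y z : mul z (a *: x + y) = a *: mul z x + mul z y.
Proof. by case: HA => _ [H _]; apply: H. Qed.
Lemma Asub i : is_subspace (A i).
Proof. by case: HA => _ [_ [H _]]; apply: H. Qed.
Lemma Aint v : A false v -> A true v -> v = 0.
Proof. by case: HA => _ [_ [_ [_ [H _]]]]; apply: H. Qed.
Lemma Agr i j x y : A i x -> A j y -> A (i (+) j) (mul x y).
Proof. by case: HA => _ [_ [_ [_ [_ [H _]]]]]; apply: H. Qed.
Lemma gdn i j l x y z : A i x -> A j y -> A l z ->
         mul x (mul y z) - mul (mul x y) z =
         ssign k i j *: (mul y (mul x z) - mul (mul y x) z)
         /\ mul (mul x y) z = ssign k j l *: mul (mul x z) y.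
Proof. by case: HA => _ [_ [_ [_ [_ [_ H]]]]]; apply: H. Qed.

Lemma A00 x y : A false x -> A false y -> A false (mul x y).
Proof. exact: Agr. Qed.
Lemma A01 x y : A false x -> A true y -> A true (mul x y).
Proof. exact: Agr. Qed.
Lemma A10 x y : A true x -> A false y -> A true (mul x y).
Proof. exact: Agr. Qed.
Lemma A11 x y : A true x -> A true y -> A false (mul x y).
Proof. exact: Agr. Qed.

Lemma mul0l z : mul 0 z = 0.
Proof.
have := mulZDl 1 0 0 z; rewrite !scale1r !addr0 => H.
have := congr1 (fun t => t - mul 0 z) H; rewrite subrr addrK => <-//.
Qed.
Lemma mul0r z : mul z 0 = 0.
Proof.
have := mulZDr 1 0 0 z; rewrite !scale1r !addr0 => H.
have := congr1 (fun t => t - mul z 0) H; rewrite subrr addrK => <-//.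
Qed.
Lemma mulDl x y z : mul (x + y) z = mul x z + mul y z.
Proof. by rewrite -{1}[x]scale1r mulZDl scale1r. Qed.
Lemma mulZl a x z : mul (a *: x) z = a *: mul x z.
Proof. by rewrite -[a *: x]addr0 mulZDl mul0l addr0. Qed.
Lemma mulNl x z : mul (- x) z = - mul x z.
Proof. by rewrite -scaleN1r mulZl scaleN1r. Qed.
Lemma mulBl x y z : mul (x - y) z = mul x z - mul y z.
Proof. by rewrite mulDl mulNl. Qed.
Lemma mulDr x y z : mul z (x + y) = mul z x + mul z y.
Proof. by rewrite -{1}[x]scale1r mulZDr scale1r. Qed.
Lemma mulZr a x z : mul z (a *: x) = a *: mul z x.
Proof. by rewrite -[a *: x]addr0 mulZDr mul0r addr0. Qed.

Lemma lnormD x y ys : ln (x + y) ys = ln x ys + ln y ys.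
Proof. by elim: ys x y => [|z ys IH] x y //=; rewrite mulDl IH. Qed.
Lemma lnormZ a x ys : ln (a *: x) ys = a *: ln x ys.
Proof. by elim: ys x => [|z ys IH] x //=; rewrite mulZl IH. Qed.
Lemma lnorm0 ys : ln 0 ys = 0.
Proof. by have := lnormZ 0 0 ys; rewrite !scale0r. Qed.
Lemma lnormN x ys : ln (- x) ys = - ln x ys.
Proof. by rewrite -scaleN1r lnormZ scaleN1r. Qed.
Lemma lnorm_cat x s1 s2 : ln x (s1 ++ s2) = ln (ln x s1) s2.
Proof. by elim: s1 x => [|z s IH] x //=. Qed.
Lemma lnorm_rcons x s b : ln x (rcons s b) = mul (ln x s) b.
Proof. by rewrite -cats1 lnorm_cat. Qed.

Lemma lnorm_linW (W : V -> Prop) ys : is_subspace W ->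
  is_subspace (fun h => W (ln h ys)).
Proof.
move=> HW; split; first by rewrite lnorm0; apply: sub0.
by move=> a x y Hx Hy; rewrite lnormD lnormZ; apply: subZD.
Qed.
Lemma mulr_linW (W : V -> Prop) b : is_subspace W ->
  is_subspace (fun h => W (mul h b)).
Proof.
move=> HW; split; first by rewrite mul0l; apply: sub0.
by move=> a x y Hx Hy; rewrite mulZDl; apply: subZD.
Qed.

Definition hom v := exists i, A i v.
Definition homs (s : seq V) := forall y, y \in s -> hom y.
Lemma homs_nil : homs [::]. Proof. by []. Qed.
Lemma homs_cons a s : hom a -> homs s -> homs (a :: s).
Proof. by move=> Ha Hs y; rewrite inE => /orP [/eqP ->|]; [| apply: Hs]. Qed.
Lemma homs_cat s1 s2 : homs s1 -> homs s2 -> homs (s1 ++ s2).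
Proof. by move=> H1 H2 y; rewrite mem_cat => /orP []; [apply: H1 | apply: H2]. Qed.

Lemma hom_mul x y : hom x -> hom y -> hom (mul x y).
Proof. by case=> i Hx [j Hy]; exists (i (+) j); apply: Agr. Qed.

Lemma swap2 h a b : hom h -> hom a -> hom b -> pm (mul (mul h a) b) (mul (mul h b) a).
Proof.
case=> i Hh [j Ha] [l Hb]; have [_ ->] := gdn Hh Ha Hb.
rewrite /ssign; case: (j && l); [right; rewrite scaleN1r | left; rewrite scale1r] => //.
Qed.

Lemma pm_lnorm u w ys : pm u w -> pm (ln u ys) (ln w ys).
Proof. by case=> ->; [left | right; rewrite lnormN]. Qed.

Lemma move_front x zs a ws : hom x -> homs zs -> hom a ->
  pm (ln x (zs ++ a :: ws)) (ln x (a :: zs ++ ws)).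
Proof.
elim: zs x => [|z zs IH] x Hx Hzs Ha /=; first exact: pm_refl.
have Hz : hom z by apply: Hzs; rewrite mem_head.
apply: pm_trans (IH (mul x z) (hom_mul Hx Hz) _ Ha) _.
  by move=> y Hy; apply: Hzs; rewrite inE Hy orbT.
change (pm (ln (mul (mul x z) a) (zs ++ ws)) (ln (mul (mul x a) z) (zs ++ ws))).
by apply: pm_lnorm; apply: swap2.
Qed.

Lemma perm_pm x s1 s2 : hom x -> homs s1 -> perm_eq s1 s2 -> pm (ln x s1) (ln x s2).
Proof.
elim: s1 x s2 => [|a s1 IH] x s2 Hx Hs Hp.
  by move: Hp; rewrite perm_sym => /perm_nilP ->; apply: pm_refl.
have Ha2 : a \in s2 by rewrite -(perm_mem Hp) mem_head.
move: Hp; case/splitPr: Ha2 => t1 t2 Hp.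
have Hp' : perm_eq s1 (t1 ++ t2).
  rewrite -(perm_cons a); apply: perm_trans Hp _.
  by apply/permP => P; rewrite /= ?count_cat /= ?count_cat /= ?count_cat /=; lia.
have Ha : hom a by apply: Hs; rewrite mem_head.
have Hs1 : homs s1 by move=> y Hy; apply: Hs; rewrite inE Hy orbT.
have Ht : homs (t1 ++ a :: t2) by move=> y; rewrite -(perm_mem Hp); apply: Hs.
apply: pm_trans (IH (mul x a) (t1 ++ t2) (hom_mul Hx Ha) Hs1 Hp') _.
apply: pm_sym; apply: (@move_front x t1 a t2 Hx) => //.
by move=> y Hy; apply: Ht; rewrite mem_cat Hy.
Qed.


Local Notation A0 := (A false).
Local Notation A1 := (A true).
Definition XS := lin_span X1.

Lemma XS_A1 d : XS d -> A1 d.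
Proof. by move=> Hd; apply: (lin_span_min Hd (Asub true)). Qed.

Ltac Aauto := solve [eauto using A00, A01, A10, A11, XS_A1].
Ltac homt := solve [exists false; Aauto | exists true; Aauto].
Ltac homst := repeat (apply: homs_cons; [homt|]); apply: homs_nil.
Ltac permt := apply/permP => P; rewrite /= ?count_cat /= ?count_cat /= ?count_cat /=; lia.

Definition Gs w := (exists h d e e', A0 h /\ XS d /\ A1 e /\ A1 e' /\ w = ln h [:: d; e; e'])
  \/ (exists h c e, A0 h /\ A0 c /\ A1 e /\ w = ln h [:: c; e]).
Definition G := lin_span Gs.
Lemma Gsub : is_subspace G. Proof. exact: lin_span_sub. Qed.

Lemma G_perm x s s' : hom x -> homs s -> perm_eq s s' -> G (ln x s') -> G (ln x s).
Proof. by move=> Hx Hs Hp; apply: pm_sub Gsub _; apply: perm_pm. Qed.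

Lemma G2 h c e : A0 h -> A0 c -> A1 e -> G (ln h [:: c; e]).
Proof. by move=> *; apply: lin_span_in; right; exists h, c, e. Qed.

Definition Good b := forall x b2 b3, A0 x -> A1 b2 -> A1 b3 -> G (ln x [:: b; b2; b3]).

Lemma Good_sub : is_subspace Good.
Proof.
split.
  by move=> x b2 b3 _ _ _; rewrite /= mul0r mul0l mul0l; apply: sub0 Gsub.
move=> a y y' Hy Hy' x b2 b3 Hx H2 H3.
have -> : ln x [:: a *: y + y'; b2; b3] = a *: ln x [:: y; b2; b3] + ln x [:: y'; b2; b3].
  by rewrite /= mulZDr !mulZDl.
by apply: subZD Gsub _ _; [apply: Hy | apply: Hy'].
Qed.

Lemma Good_X d : XS d -> Good d.
Proof. by move=> Hd x b2 b3 Hx H2 H3; apply: lin_span_in; left; exists x, d, b2, b3. Qed.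

Lemma LSeq i j l x y z : A i x -> A j y -> A l z -> ssign k i j = 1 ->
  mul x (mul y z) = mul (mul x y) z + (mul y (mul x z) - mul (mul y x) z).
Proof.
move=> Hx Hy Hz Hs; have [E _] := gdn Hx Hy Hz; move: E; rewrite Hs scale1r.
by move/eqP; rewrite subr_eq addrC => /eqP.
Qed.

Lemma Good_L1 u v : A1 u -> A0 v -> Good (mul u v).
Proof.
move=> Hu Hv x b2 b3 Hx H2 H3.
have E : ln x [:: mul u v; b2; b3] =
  ln x [:: u; v; b2; b3] + ln u [:: mul x v; b2; b3] - ln u [:: x; v; b2; b3].
  by rewrite /= (LSeq Hx Hu Hv) // !(mulDl, mulNl) addrA.
rewrite E; apply: subB Gsub _ _; first apply: subD Gsub _ _.
- apply: (@G_perm x _ [:: u; b2; v; b3]); [homt | homst | permt |].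
  by apply: G2; Aauto.
- apply: (@G_perm u _ [:: b2; mul x v; b3]); [homt | homst | permt |].
  by apply: G2; Aauto.
- apply: (@G_perm u _ [:: x; b2; v; b3]); [homt | homst | permt |].
  by apply: (@G2 (mul (mul u x) b2)); Aauto.
Qed.

Lemma Good_L2 u v : A0 u -> A1 v -> Good v -> Good (mul u v).
Proof.
move=> Hu Hv Gv x b2 b3 Hx H2 H3.
apply: (@G_perm x _ [:: b2; mul u v; b3]); [homt | homst | permt |].
set z := mul x b2.
have Hz : A1 z by Aauto.
have E : ln x [:: b2; mul u v; b3] =
  ln x [:: b2; u; v; b3] + ln u [:: mul z v; b3] - ln u [:: z; v; b3].
  by rewrite /= -/z (LSeq Hz Hu Hv) // !(mulDl, mulNl) addrA.
rewrite E; apply: subB Gsub _ _; first apply: subD Gsub _ _.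
- apply: (@G_perm x _ [:: u; v; b2; b3]); [homt | homst | permt |].
  by apply: Gv; Aauto.
- by apply: G2; Aauto.
- apply: (@G_perm u _ [:: v; z; b3]); [homt | homst | permt |].
  by apply: Gv; Aauto.
Qed.

Lemma all_Good b : A1 b -> Good b.
Proof.
pose S v := exists v0 v1, A0 v0 /\ A1 v1 /\ Good v1 /\ v = v0 + v1.
have HS : is_subspace S.
  split; first by exists 0, 0; rewrite addr0; do !split; try apply: sub0;
    [apply: Asub | apply: Asub | apply: Good_sub].
  move=> a x y [x0 [x1 [Hx0 [Hx1 [Gx1 ->]]]]] [y0 [y1 [Hy0 [Hy1 [Gy1 ->]]]]].
  exists (a *: x0 + y0), (a *: x1 + y1); do !split.
  - by apply: subZD (Asub false) _ _.
  - by apply: subZD (Asub true) _ _.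
  - by apply: subZD Good_sub _ _.
  - by rewrite scalerDr addrACA.
have HSm : forall x y, S x -> S y -> S (mul x y).
  move=> _ _ [x0 [x1 [Hx0 [Hx1 [Gx1 ->]]]]] [y0 [y1 [Hy0 [Hy1 [Gy1 ->]]]]].
  exists (mul x0 y0 + mul x1 y1), (mul x0 y1 + mul x1 y0); do !split.
  - by apply: subD (Asub false) _ _; Aauto.
  - by apply: subD (Asub true) _ _; Aauto.
  - by apply: subD Good_sub _ _; [apply: Good_L2 | apply: Good_L1].
  - by rewrite !mulDl !mulDr [mul x1 y0 + _]addrC addrACA.
have HX : forall x, X0 x \/ X1 x -> S x.
  move=> x [Hx|Hx].
    exists x, 0; rewrite addr0; do !split; [exact: HX0 | apply: sub0 (Asub true) | apply: sub0 Good_sub].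
  exists 0, x; rewrite add0r; do !split; [apply: sub0 (Asub false) | exact: HX1 |].
  by apply: Good_X; apply: lin_span_in.
move=> Hb; have [b0 [b1 [Hb0 [Hb1 [Gb1 Eb]]]]] := Hgen b HS HSm HX.
have : b0 = 0.
  apply: Aint => //; have -> : b0 = b - b1 by rewrite Eb addrK.
  by apply: subB (Asub true) _ _.
by move=> E0; rewrite Eb E0 add0r.
Qed.

Lemma K3 x b1 b2 b3 : A0 x -> A1 b1 -> A1 b2 -> A1 b3 -> G (ln x [:: b1; b2; b3]).
Proof. by move=> Hx H1 H2 H3; apply: all_Good. Qed.


Fixpoint sat (Ps : seq (V -> Prop)) (ys : seq V) : Prop :=
  match Ps, ys with
  | [::], [::] => True
  | P :: Ps', y :: ys' => P y /\ sat Ps' ys'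
  | _, _ => False
  end.

Lemma sat_nth Ps ys :
  (size ys = size Ps /\ forall i, (i < size Ps)%N -> nth (fun _ => True) Ps i (nth 0 ys i))
  <-> sat Ps ys.
Proof.
elim: Ps ys => [|P Ps IH] [|y ys] /=.
- by split=> // _; split=> // i.
- by split=> // [[]].
- by split=> // [[]].
split.
  case=> /eqP; rewrite eqSS => /eqP Hs H; split; first exact: (H 0%N).
  by apply/IH; split=> // i Hi; exact: (H i.+1).
case=> Hy /IH [Hs H]; split; first by rewrite Hs.
by case=> [|i] //= Hi; apply: H.
Qed.

Lemma Lprods_sat V1 Vs w :
  Lprods mul V1 Vs w <-> exists x ys, V1 x /\ sat Vs ys /\ w = ln x ys.
Proof.
split.
  by case=> x [ys [Hx [Hs [Hn ->]]]]; exists x, ys; split=> //; split=> //; apply/sat_nth.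
by case=> x [ys [Hx [/sat_nth [Hs Hn] ->]]]; exists x, ys.
Qed.

Lemma sat_cat Ps Qs ys1 ys2 : sat Ps ys1 -> sat Qs ys2 -> sat (Ps ++ Qs) (ys1 ++ ys2).
Proof.
elim: Ps ys1 => [|P Ps IH] [|y ys] //= [Hy H1] H2; split=> //; exact: IH.
Qed.

Lemma sat_cat_inv Ps Qs ys : sat (Ps ++ Qs) ys ->
  exists ys1 ys2, ys = ys1 ++ ys2 /\ sat Ps ys1 /\ sat Qs ys2.
Proof.
elim: Ps ys => [|P Ps IH] ys /=; first by move=> H; exists [::], ys.
case: ys => [|y ys] // [Hy /IH [ys1 [ys2 [-> [H1 H2]]]]].
by exists (y :: ys1), ys2.
Qed.

Lemma sat_nseq (P : V -> Prop) n ys :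
  sat (nseq n P) ys <-> size ys = n /\ forall y, y \in ys -> P y.
Proof.
elim: n ys => [|n IH] [|y ys] /=.
- by split=> // _; split.
- by split=> // [[]].
- by split=> // [[]].
split.
  case=> Hy /IH [Hs H]; split; first by rewrite Hs.
  by move=> z; rewrite inE => /orP [/eqP ->|/H].
case=> /eqP; rewrite eqSS => /eqP Hs H; split; first by apply: H; exact: mem_head.
by apply/IH; split=> // z Hz; apply: H; rewrite inE Hz orbT.
Qed.

Lemma sat_homs (P : V -> Prop) n ys : (forall y, P y -> hom y) -> sat (nseq n P) ys -> homs ys.
Proof. by move=> HP /sat_nseq [_ H] y /H; apply: HP. Qed.

Definition Shape t m p w := exists x cs ds es, A0 x /\ sat (nseq t A0) cs /\
  sat (nseq m XS) ds /\ sat (nseq p A1) es /\ w = ln x (cs ++ ds ++ es).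

Lemma Lprods_Shape t m p w :
  Lprods mul A0 (nseq t A0 ++ nseq m XS ++ nseq p A1) w -> Shape t m p w.
Proof.
case/Lprods_sat=> x [ys [Hx [/sat_cat_inv [cs [ys2 [-> [Hc /sat_cat_inv [ds [es [-> [Hd He]]]]]]]] ->]]].
by exists x, cs, ds, es.
Qed.

Definition Tq q := lin_span (fun w => exists t m p : nat,
          (2 * t + m + p)%N = q /\ (p = 1 \/ p = 2)%N /\
          Lspan mul A0 (nseq t A0 ++ nseq m (lin_span X1) ++ nseq p A1 : seq (V -> Prop)) w).

Lemma Shape_T q t m p w : (2 * t + m + p)%N = q -> (p = 1 \/ p = 2)%N -> Shape t m p w -> Tq q w.
Proof.
move=> Hs Hp [x [cs [ds [es [Hx [Hc [Hd [He ->]]]]]]]].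
apply: lin_span_in; exists t, m, p; do 2!split => //.
apply: lin_span_in; apply/Lprods_sat; exists x, (cs ++ ds ++ es); do !split => //.
by apply: sat_cat => //; apply: sat_cat.
Qed.

Lemma homA0 y : A0 y -> hom y. Proof. by exists false. Qed.
Lemma homA1 y : A1 y -> hom y. Proof. by exists true. Qed.
Lemma homXS y : XS y -> hom y. Proof. by move=> /XS_A1; exists true. Qed.

Lemma step q w b : (2 <= q)%N -> A1 b -> Tq q w -> Tq q.+1 (mul w b).
Proof.
move=> Hq Hb Hw.
apply: (lin_span_min Hw (mulr_linW b (lin_span_sub _))) => w' [t [m [p [Hsum [Hp Hl]]]]].
apply: (lin_span_min Hl (mulr_linW b (lin_span_sub _))) => w''.
move/Lprods_Shape=> [x [cs [ds [es [Hx [Hc [Hd [He ->]]]]]]]].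
have Hcs := sat_homs homA0 Hc; have Hds := sat_homs homXS Hd.
rewrite -lnorm_rcons !rcons_cat.
case: Hp => Hp; subst p.
  move: He; case: es => [|e [|e' es]] /=; [by [] | | by case=> _ []]; move=> [He _].
  apply: (@Shape_T _ t m 2); [lia | by right |].
  by exists x, cs, ds, [:: e; b]; do !split.
move: He; case: es => [|e1 [|e2 [|e3 es]]] /=; [by [] | by case | | by case=> _ [_ []]]; move=> [He1 [He2 _]].
apply: (pm_sub (lin_span_sub _) (@perm_pm x _ ([:: e1; e2; b] ++ cs ++ ds) _ _ _)).
- by exists false.
- by apply: homs_cat => //; apply: homs_cat => //; homst.
- by apply/permP => P; rewrite /= ?count_cat /= ?count_cat /= ?count_cat /=; lia.
rewrite lnorm_cat.
have HG : G (ln x [:: e1; e2; b]) by apply: K3.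
apply: (lin_span_min HG (lnorm_linW (cs ++ ds) (lin_span_sub _))) => g.
case=> [[h [d [e [e' [Hh [Hd' [He [He' ->]]]]]]]] | [h [c [e [Hh [Hc' [He ->]]]]]]].
  rewrite -lnorm_cat.
  apply: (pm_sub (lin_span_sub _) (@perm_pm h _ (cs ++ (d :: ds) ++ [:: e; e']) _ _ _)).
  - by exists false.
  - by apply: homs_cat; [homst | apply: homs_cat].
  - by apply/permP => P; rewrite /= ?count_cat /= ?count_cat /= ?count_cat /=; lia.
  apply: (@Shape_T _ t m.+1 2); [lia | by right |].
  by exists h, cs, (d :: ds), [:: e; e']; do !split.
rewrite -lnorm_cat.
apply: (pm_sub (lin_span_sub _) (@perm_pm h _ ((c :: cs) ++ ds ++ [:: e]) _ _ _)).
- by exists false.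
- by apply: homs_cat; [homst | apply: homs_cat].
- by apply/permP => P; rewrite /= ?count_cat /= ?count_cat /= ?count_cat /=; lia.
apply: (@Shape_T _ t.+1 m 1); [lia | by left |].
by exists h, (c :: cs), ds, [:: e]; do !split.
Qed.

Lemma main_prods q : (1 <= q)%N -> forall x ys, A0 x -> sat (nseq q A1) ys -> Tq q (ln x ys).
Proof.
elim: q => [//|q IH] _ x ys Hx Hys.
case: q IH Hys => [|q] IH Hys.
  by apply: (@Shape_T _ 0 0 1) => //; [by left | exists x, [::], [::], ys].
case: q IH Hys => [|q] IH Hys.
  by apply: (@Shape_T _ 0 0 2) => //; [by right | exists x, [::], [::], ys].
move: Hys; case/lastP: ys => [|ys b] Hys; first by case/sat_nseq: Hys.
case/sat_nseq: Hys; rewrite size_rcons => /eqP; rewrite eqSS => /eqP Hs H.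
rewrite lnorm_rcons; apply: step => //.
  by apply: H; rewrite mem_rcons mem_head.
apply: IH => //; apply/sat_nseq; split=> // y Hy; apply: H.
by rewrite mem_rcons inE Hy orbT.
Qed.

End Alg.

Theorem lemma4p3 (k : fieldType) (V : lmodType k) (mul : V -> V -> V)
    (A : bool -> V -> Prop) (X0 X1 : V -> Prop) :
  GDN_superalgebra mul A ->
  (forall x, X0 x -> A false x) ->
  (forall x, X1 x -> A true x) ->
  generates mul (fun x => X0 x \/ X1 x) ->
  forall q : nat, (1 <= q)%N ->
  forall v, Lspan mul (A false) (nseq q (A true)) v ->
  lin_span (fun w => exists t m p : nat,
          (2 * t + m + p)%N = q /\ (p = 1 \/ p = 2)%N /\
          Lspan mul (A false)
            (nseq t (A false) ++ nseq m (lin_span X1) ++ nseq p (A true) : seq (V -> Prop)) w) v.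
Proof.
move=> HA HX0 HX1 Hgen q Hq v Hv.
apply: (lin_span_min Hv (lin_span_sub _)) => w /Lprods_sat [x [ys [Hx [Hys ->]]]].
exact: (main_prods HA HX0 HX1 Hgen Hq Hx Hys).
Qed.
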